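(* In a star-shaped zero-sum network game with center player $1$ (i.e. $r_{i,j}=0$ whenever $i\neq1$ and $j\neq1$), the Nash equilibrium value of the center player is unique: for any two Nash equilibria $\pi,\pi'$ of the game, $r_1(\pi)=r_1(\pi')$.
   Context: Players $\mathcal N=[n]$ with finite action sets $\mathcal A_i$ and pairwise matrices $r_{1,i}\in\mathbb R^{|\mathcal A_1|\times|\mathcal A_i|}$, $r_{i,1}\in\mathbb R^{|\mathcal A_i|\times|\mathcal A_1|}$; for a product policy $\pi$, $r_1(\pi)=\sum_{i\neq1}\pi_1^\top r_{1,i}\pi_i$ and $r_i(\pi)=\pi_i^\top r_{i,1}\pi_1$ for $i\neq1$. Zero-sum means $\sum_ir_i(\pi)=0$ for every product policy. A Nash equilibrium is a product policy $\pi$ with $r_i(\mu_i,\pi_{-i})\le r_i(\pi)$ for all $i$ and $\mu_i\in\Delta(\mathcal A_i)$. *)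

(* Defs.v *)
From mathcomp Require Import all_boot all_order all_algebra.
Set Implicit Arguments. Unset Strict Implicit. Unset Printing Implicit Defensive.
Import Order.TTheory GRing.Theory Num.Theory.
Local Open Scope ring_scope.

(* Players are 'I_n.+1; the center (paper's player 1) is ord0.
   Player i has action set 'I_(k i).  A mixed strategy of player i is a
   function 'I_(k i) -> R lying in the probability simplex. *)

Definition in_simplex (R : realFieldType) (m : nat) (p : 'I_m -> R) : Prop :=
  (forall a, 0 <= p a) /\ \sum_(a < m) p a = 1.

Definition bil (R : realFieldType) (m l : nat) (p : 'I_m -> R) (M : 'M[R]_(m, l))
    (q : 'I_l -> R) : R :=
  \sum_(a < m) \sum_(b < l) p a * M a b * q b.

Definition r_center (R : realFieldType) (n : nat) (k : 'I_n.+1 -> nat)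
    (r1 : forall i : 'I_n.+1, 'M[R]_(k ord0, k i))
    (p0 : 'I_(k ord0) -> R) (pi : forall i : 'I_n.+1, 'I_(k i) -> R) : R :=
  \sum_(i < n.+1 | i != ord0) bil p0 (r1 i) (pi i).

Definition r_leaf (R : realFieldType) (n : nat) (k : 'I_n.+1 -> nat)
    (ri1 : forall i : 'I_n.+1, 'M[R]_(k i, k ord0)) (i : 'I_n.+1)
    (q : 'I_(k i) -> R) (p0 : 'I_(k ord0) -> R) : R :=
  bil q (ri1 i) p0.

Definition reward (R : realFieldType) (n : nat) (k : 'I_n.+1 -> nat)
    (r1 : forall i : 'I_n.+1, 'M[R]_(k ord0, k i))
    (ri1 : forall i : 'I_n.+1, 'M[R]_(k i, k ord0))
    (pi : forall i : 'I_n.+1, 'I_(k i) -> R) (i : 'I_n.+1) : R :=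
  if i == ord0 then r_center r1 (pi ord0) pi else r_leaf ri1 (pi i) (pi ord0).

Definition product_policy (R : realFieldType) (n : nat) (k : 'I_n.+1 -> nat)
    (pi : forall i : 'I_n.+1, 'I_(k i) -> R) : Prop :=
  forall i, in_simplex (pi i).

Definition zero_sum (R : realFieldType) (n : nat) (k : 'I_n.+1 -> nat)
    (r1 : forall i : 'I_n.+1, 'M[R]_(k ord0, k i))
    (ri1 : forall i : 'I_n.+1, 'M[R]_(k i, k ord0)) : Prop :=
  forall pi, product_policy pi -> \sum_(i < n.+1) reward r1 ri1 pi i = 0.

(* Nash equilibrium: no unilateral deviation mu_i in the simplex is profitable.
   The deviating profile (mu_i, pi_{-i}) is written out via r_center / r_leaf. *)
Definition nash (R : realFieldType) (n : nat) (k : 'I_n.+1 -> nat)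
    (r1 : forall i : 'I_n.+1, 'M[R]_(k ord0, k i))
    (ri1 : forall i : 'I_n.+1, 'M[R]_(k i, k ord0))
    (pi : forall i : 'I_n.+1, 'I_(k i) -> R) : Prop :=
  product_policy pi /\
  (forall mu : 'I_(k ord0) -> R, in_simplex mu ->
      r_center r1 mu pi <= r_center r1 (pi ord0) pi) /\
  (forall i : 'I_n.+1, i != ord0 -> forall mu : 'I_(k i) -> R, in_simplex mu ->
      r_leaf ri1 mu (pi ord0) <= r_leaf ri1 (pi i) (pi ord0)).

(* Main.v *)
Require Import Defs.
From mathcomp Require Import all_boot all_order all_algebra.
Set Implicit Arguments. Unset Strict Implicit. Unset Printing Implicit Defensive.
Import Order.TTheory GRing.Theory Num.Theory.
Local Open Scope ring_scope.

Section Aux.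
Variables (R : realFieldType) (n : nat) (k : 'I_n.+1 -> nat)
    (r1 : forall i : 'I_n.+1, 'M[R]_(k ord0, k i))
    (ri1 : forall i : 'I_n.+1, 'M[R]_(k i, k ord0)).

Definition upd (x : 'I_(k ord0) -> R) (pi : forall i : 'I_n.+1, 'I_(k i) -> R)
  : forall i : 'I_n.+1, 'I_(k i) -> R :=
  fun i => match @eqP _ ord0 i with
           | ReflectT e => eq_rect ord0 (fun j => 'I_(k j) -> R) x i e
           | ReflectF _ => pi i end.
Arguments upd : clear implicits.

Lemma upd0 (x : 'I_(k ord0) -> R) pi : @upd x pi ord0 = x.
Proof.
rewrite /upd; case: eqP => // e.
by rewrite (eq_axiomK e).
Qed.

Lemma updN x pi i : i != ord0 -> upd x pi i = pi i.
Proof.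
rewrite /upd => /negP H; case: eqP => // e.
by exfalso; apply: H; rewrite -e.
Qed.

Lemma zs_split pi : zero_sum r1 ri1 -> product_policy pi ->
  r_center r1 (pi ord0) pi + \sum_(i < n.+1 | i != ord0) r_leaf ri1 (pi i) (pi ord0) = 0.
Proof.
move=> zs pp; have H := zs pi pp.
rewrite (bigD1 ord0) //= in H; apply: (etrans _ H); rewrite /reward eqxx; congr (_ + _).
by apply: eq_bigr => i /negPf ->.
Qed.

Lemma le_val pi pi' : zero_sum r1 ri1 -> nash r1 ri1 pi -> nash r1 ri1 pi' ->
  reward r1 ri1 pi' ord0 <= reward r1 ri1 pi ord0.
Proof.
move=> zs [pp [pc pl]] [pp' [pc' pl']].
rewrite /reward eqxx.
have h1 := pc (pi' ord0) (pp' ord0).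
set sigma := upd (pi' ord0) pi.
have ps : product_policy sigma.
  move=> i; case: (eqVneq i ord0) => [->|ne].
    by rewrite /sigma upd0.
  by rewrite /sigma updN.
have zS := zs_split zs ps.
have zP := zs_split zs pp'.
have e1 : r_center r1 (sigma ord0) sigma = r_center r1 (pi' ord0) pi.
  rewrite /sigma upd0 /r_center; apply: eq_bigr => i ne; by rewrite updN.
have e2 : \sum_(i < n.+1 | i != ord0) r_leaf ri1 (sigma i) (sigma ord0)
        = \sum_(i < n.+1 | i != ord0) r_leaf ri1 (pi i) (pi' ord0).
  apply: eq_bigr => i ne; by rewrite /sigma upd0 updN.
rewrite e1 e2 in zS.
have h2 : \sum_(i < n.+1 | i != ord0) r_leaf ri1 (pi i) (pi' ord0)
       <= \sum_(i < n.+1 | i != ord0) r_leaf ri1 (pi' i) (pi' ord0).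
  apply: ler_sum => i ne; exact: pl' i ne (pi i) (pp i).
apply: le_trans h1.
have -> : r_center r1 (pi' ord0) pi' = - \sum_(i < n.+1 | i != ord0) r_leaf ri1 (pi' i) (pi' ord0).
  by apply/eqP; rewrite -addr_eq0 zP.
have -> : r_center r1 (pi' ord0) pi = - \sum_(i < n.+1 | i != ord0) r_leaf ri1 (pi i) (pi' ord0).
  by apply/eqP; rewrite -addr_eq0 zS.
by rewrite lerN2.
Qed.
End Aux.

Theorem proposition9 (R : realFieldType) (n : nat) (k : 'I_n.+1 -> nat)
    (r1 : forall i : 'I_n.+1, 'M[R]_(k ord0, k i))
    (ri1 : forall i : 'I_n.+1, 'M[R]_(k i, k ord0))
    (pi pi' : forall i : 'I_n.+1, 'I_(k i) -> R) :
  zero_sum r1 ri1 -> nash r1 ri1 pi -> nash r1 ri1 pi' ->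
  reward r1 ri1 pi ord0 = reward r1 ri1 pi' ord0.
Proof.
move=> zs h h'; apply/eqP; rewrite eq_le.
by rewrite (le_val zs h h') (le_val zs h' h).
Qed.
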